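(* Let $X_1,\dots,X_n$ be i.i.d. $\mathsf{Bernoulli}(p)$ with $p\in[\frac12,1)$, and let $Y_k=X_k\oplus V_k$ for $k=1,\dots,n$, where $V_1,\dots,V_n$ are i.i.d. $\mathsf{Bernoulli}(\alpha)$, independent of $X^n$, with $\alpha\in[0,\frac12)$ and $\bar\alpha>p$. Let $q=\alpha\bar p+\bar\alpha p$ and $$\zeta_n(\varepsilon)=\frac{\bar\alpha^n-\varepsilon^n}{(\bar\alpha p)^n-(\alpha\bar p)^n}.$$ Then there exists $\varepsilon_{\mathsf L}<\bar\alpha$ such that for all $\varepsilon\in[\varepsilon_{\mathsf L},\bar\alpha]$, $$\underline{\mathcal{h}}_n^n(\varepsilon)=1-\zeta_n(\varepsilon)q^n,$$ and the $2^n$-ary Z-channel $\mathsf{Z}_n(\zeta_n(\varepsilon))$ achieves $\underline{\mathcal{h}}_n(\varepsilon)$ on this interval.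
   Context: $\bar a=1-a$; $\oplus$ is addition mod 2; $\mathsf{Bernoulli}(p)$ has $\Pr(\cdot=1)=p$. $\mathsf{P}_{\mathsf{c}}(X^n)=\max_{x^n}P_{X^n}(x^n)$ and $\mathsf{P}_{\mathsf{c}}(X^n|Z^n)=\sum_{z^n}\max_{x^n}P_{X^nZ^n}(x^n,z^n)$. For $\varepsilon\in[\mathsf{P}_{\mathsf{c}}^{1/n}(X^n),\mathsf{P}_{\mathsf{c}}^{1/n}(X^n|Y^n)]$ (here $=[p,\bar\alpha]$), $$\underline{\mathcal{h}}_n(\varepsilon)=\sup\{\mathsf{P}_{\mathsf{c}}^{1/n}(Y^n|Z^n): P_{Z^n|Y^n},\ \mathcal{Z}^n=\{0,1\}^n,\ X^n - Y^n - Z^n,\ \mathsf{P}_{\mathsf{c}}^{1/n}(X^n|Z^n)\le\varepsilon\},$$ with $X^n - Y^n - Z^n$ a Markov chain. The $2^n$-ary Z-channel $\mathsf{Z}_n(\gamma)$ is the channel $\mathsf{W}$ with input and output alphabet $\{0,1\}^n$ given by $\mathsf{W}(y|y)=1$ for $y\ne\mathbf 1$, $\mathsf{W}(\mathbf 0|\mathbf 1)=\gamma$, $\mathsf{W}(\mathbf 1|\mathbf 1)=1-\gamma$, where $\mathbf 0=(0,\dots,0)$, $\mathbf 1=(1,\dots,1)$. ''Achieves'' means it satisfies the privacy constraint and attains the supremum. *)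

(* Defs.v *)
From HB Require Import structures.
From mathcomp Require Import all_boot all_order all_algebra.
From mathcomp Require Import classical_sets reals exp.
Set Implicit Arguments. Unset Strict Implicit. Unset Printing Implicit Defensive.
Import Order.TTheory GRing.Theory Num.Theory.
Local Open Scope ring_scope.
Local Open Scope classical_set_scope.

Definition bstr (n : nat) := {ffun 'I_n -> bool}.
Definition zeros n : bstr n := [ffun => false].
Definition ones n : bstr n := [ffun => true].

Section Model.
Variable R : realType.
Variable n : nat.

Definition PX (p : R) (x : bstr n) : R :=
  \prod_(i < n) (if x i then p else 1 - p).

Definition PYgX (a : R) (x y : bstr n) : R :=
  \prod_(i < n) (if addb (x i) (y i) then a else 1 - a).

Definition is_channel (W : bstr n -> bstr n -> R) : Prop :=
  (forall y z, 0 <= W y z) /\ (forall y, \sum_z W y z = 1).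

(* joint law of (X^n, Y^n, Z^n) for the Markov chain X - Y - Z *)
Definition Pjoint (p a : R) (W : bstr n -> bstr n -> R) (x y z : bstr n) : R :=
  PX p x * PYgX a x y * W y z.

Definition PcXgZ p a W : R :=
  \sum_(z : bstr n) \big[Num.max/0]_(x : bstr n) \sum_(y : bstr n) Pjoint p a W x y z.

Definition PcYgZ p a W : R :=
  \sum_(z : bstr n) \big[Num.max/0]_(y : bstr n) \sum_(x : bstr n) Pjoint p a W x y z.

Definition nroot (u : R) : R := u `^ (n%:R)^-1.

Definition feasible p a eps W : Prop :=
  is_channel W /\ nroot (PcXgZ p a W) <= eps.

Definition hlow (p a eps : R) : R :=
  sup [set r : R | exists W, feasible p a eps W /\ r = nroot (PcYgZ p a W)].

Definition Zchan (g : R) (y z : bstr n) : R :=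
  if y != ones n then (z == y)%:R
  else if z == zeros n then g
  else if z == ones n then 1 - g else 0.

Definition achieves p a eps W : Prop :=
  feasible p a eps W /\ nroot (PcYgZ p a W) = hlow p a eps.

End Model.

Definition zeta {R : realType} (n : nat) (p a eps : R) : R :=
  ((1 - a) ^+ n - eps ^+ n) / (((1 - a) * p) ^+ n - (a * (1 - p)) ^+ n).
Arguments PX {R} n p x.
Arguments PcXgZ {R} n p a W.
Arguments PcYgZ {R} n p a W.
Arguments hlow {R} n p a eps.
Arguments Zchan {R} n g y z.
Arguments achieves {R} n p a eps W.
Arguments feasible {R} n p a eps W.
Arguments is_channel {R} n W.

(* Main.v *)
Set Warnings "-notation-overridden,-ambiguous-paths".
Require Import Defs.
From HB Require Import structures.
From mathcomp Require Import all_boot all_order all_algebra.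
From mathcomp Require Import classical_sets reals exp.
From mathcomp Require Import ring lra.
Import Order.TTheory GRing.Theory Num.Theory.
Local Open Scope ring_scope.
Set Implicit Arguments. Unset Strict Implicit. Unset Printing Implicit Defensive.




Lemma prodc (R : realType) (n : nat) (c : R) : \prod_(i < n) c = c ^+ n.
Proof. rewrite big_const_ord; elim: n => [|n IH] //=; by rewrite IH exprS. Qed.

Lemma keyprod (R : realType) (A B : R) : 0 <= B -> B <= A ->
  forall (n : nat) (u v : 'I_n -> R),
  (forall i, 0 <= v i) -> (forall i, 0 <= u i) -> (forall i, u i * B <= v i * A) ->
  (\prod_(i < n) u i) * (A + B) ^+ n <= A ^+ n * \prod_(i < n) (u i + v i) /\
  (\prod_(i < n) u i - \prod_(i < n) v i) * (A + B) ^+ n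
     <= (A ^+ n - B ^+ n) * \prod_(i < n) (u i + v i).
Proof.
move=> B0 BA; elim=> [|n IH] u v v0 u0 uv.
  by rewrite !big_ord0 !expr0 subrr !mul0r !mul1r; split.
have [IH1 IH2] := IH (fun i => u (lift ord0 i)) (fun i => v (lift ord0 i))
   (fun i => v0 _) (fun i => u0 _) (fun i => uv _).
rewrite !big_ord_recl.
set U := \prod_(i < n) u (lift ord0 i) in IH1 IH2 *.
set V := \prod_(i < n) v (lift ord0 i) in IH1 IH2 *.
set S := \prod_(i < n) (u (lift ord0 i) + v (lift ord0 i)) in IH1 IH2 *.
have U0 : 0 <= U by apply: prodr_ge0 => i _.
have V0 : 0 <= V by apply: prodr_ge0 => i _.
have S0 : 0 <= S by apply: prodr_ge0 => i _; apply: addr_ge0.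
set X := U * (A + B) ^+ n in IH1 IH2.
have X0 : 0 <= X by rewrite /X mulr_ge0 // exprn_ge0 // addr_ge0 // (le_trans B0).
have Y0 : 0 <= V * (A + B) ^+ n by rewrite mulr_ge0 // exprn_ge0 // addr_ge0 // (le_trans B0).
set Y := V * (A + B) ^+ n in IH2 Y0.
have h1 := uv ord0; have h2 := u0 ord0; have h3 := v0 ord0.
set u0' := u ord0 in h1 h2 *; set v0' := v ord0 in h1 h2 h3 *.
have A0 : 0 <= A by apply: le_trans BA.
have E1 : (u0' * U) * (A + B) ^+ n.+1 = (u0' * (A+B)) * X by rewrite /X exprS; ring.
have E2 : (u0' * U - v0' * V) * (A + B) ^+ n.+1 = (u0' * (A+B)) * X - (v0' * (A+B)) * Y
  by rewrite /X /Y exprS; ring.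
rewrite E1 E2 !exprS; split.
  have : u0' * (A + B) <= A * (u0' + v0') by nra.
  move=> H.
  have s0 : 0 <= u0' + v0' by lra.
  apply: (le_trans (ler_wpM2r X0 H)).
  have AS : 0 <= A * (u0' + v0') by apply: mulr_ge0.
  have -> : A * A ^+ n * ((u0' + v0') * S) = (A * (u0' + v0')) * (A ^+ n * S) by ring.
  by apply: ler_wpM2l.
have step1 : u0' * (A + B) * X - v0' * (A + B) * Y <= (A * X - B * Y) * (u0' + v0').
  have : 0 <= (A * v0' - u0' * B) * (X + Y) by apply: mulr_ge0; [lra | lra].
  move=> H; nra.
apply: (le_trans step1).
have step2 : A * X - B * Y <= (A * A ^+ n - B * B ^+ n) * S.
  have : A * X - B * Y = B * (X - Y) + (A - B) * X by ring.
  move=> ->.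
  have IH2' : X - Y <= (A ^+ n - B ^+ n) * S by rewrite /X /Y -mulrBl.
  have : B * (X - Y) <= B * ((A ^+ n - B ^+ n) * S) by apply: ler_wpM2l.
  have : (A - B) * X <= (A - B) * (A ^+ n * S) by apply: ler_wpM2l; lra.
  move=> H1 H2.
  have -> : A * A ^+ n - B * B ^+ n = B * (A ^+ n - B ^+ n) + (A - B) * A ^+ n by ring.
  apply: (le_trans (lerD H2 H1)); rewrite le_eqVlt; apply/orP; left; apply/eqP; ring.
have s0 : 0 <= u0' + v0' by lra.
apply: (le_trans (ler_wpM2r s0 step2)); rewrite le_eqVlt; apply/orP; left; apply/eqP; ring.
Qed.


Definition P1 (R : realType) (p a : R) (x y : bool) : R :=
  (if x then p else 1 - p) * (if addb x y then a else 1 - a).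
Definition PP (R : realType) (n : nat) (p a : R) (x y : bstr n) : R :=
  \prod_i P1 p a (x i) (y i).
Definition PY (R : realType) (n : nat) (p a : R) (y : bstr n) : R :=
  \sum_(x : bstr n) PX n p x * PYgX a x y.

Lemma PPE (R : realType) (n : nat) (p a : R) (x y : bstr n) :
  PX n p x * PYgX a x y = PP p a x y.
Proof. by rewrite /PX /PYgX /PP /P1 -big_split. Qed.

Lemma sumPX (R : realType) (n : nat) (p : R) : \sum_(x : bstr n) PX n p x = 1.
Proof.
rewrite /PX.
have := bigA_distr_bigA (fun (i : 'I_n) (b : bool) => if b then p else 1 - p).
move=> /= <-; rewrite big1 // => i _; rewrite big_bool /=; ring.
Qed.

Lemma sumPYgX (R : realType) (n : nat) (a : R) (x : bstr n) :
  \sum_(y : bstr n) PYgX a x y = 1.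
Proof.
rewrite /PYgX.
have := bigA_distr_bigA (fun (i : 'I_n) (b : bool) => if addb (x i) b then a else 1 - a).
move=> /= <-; rewrite big1 // => i _; rewrite big_bool /=; case: (x i) => /=; ring.
Qed.

Lemma PYE (R : realType) (n : nat) (p a : R) (y : bstr n) :
  PY p a y = \prod_i (if y i then a * (1 - p) + (1 - a) * p
                        else 1 - (a * (1 - p) + (1 - a) * p)).
Proof.
rewrite /PY (eq_bigr (fun x => PP p a x y)); last by move=> x _; rewrite PPE.
rewrite /PP.
have := bigA_distr_bigA (fun (i : 'I_n) (b : bool) => P1 p a b (y i)).
move=> /= <-; apply: eq_bigr => i _; rewrite big_bool /P1 /=.
by case: (y i) => /=; ring.
Qed.

Lemma sumPY (R : realType) (n : nat) (p a : R) : \sum_(y : bstr n) PY p a y = 1.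
Proof.
rewrite /PY exchange_big /=.
rewrite (eq_bigr (fun x => PX n p x)) ?sumPX // => x _.
by rewrite -mulr_sumr sumPYgX mulr1.
Qed.

Lemma PYgX_diag (R : realType) (n : nat) (a : R) (y : bstr n) :
  PYgX a y y = (1 - a) ^+ n.
Proof.
rewrite /PYgX (eq_bigr (fun _ => 1 - a)) ?prodc // => i _; by rewrite addbb.
Qed.

Lemma sum_diag (R : realType) (n : nat) (p a : R) :
  \sum_(y : bstr n) PX n p y * PYgX a y y = (1 - a) ^+ n.
Proof.
rewrite (eq_bigr (fun y => PX n p y * (1 - a) ^+ n)); last by move=> y _; rewrite PYgX_diag.
by rewrite -mulr_suml sumPX mul1r.
Qed.

Lemma P1_ge0 (R : realType) (p a : R) x y : 0 <= p <= 1 -> 0 <= a <= 1 -> 0 <= P1 p a x y.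
Proof.
move=> /andP[p0 p1] /andP[a0 a1]; rewrite /P1.
by apply: mulr_ge0; [case: x => //; lra | case: addb => //; lra].
Qed.

Lemma key_ineq (R : realType) (n : nat) (p a : R) (x y : bstr n) :
  2^-1 <= p -> p < 1 -> 0 <= a -> a < 2^-1 -> p < 1 - a ->
  (PP p a y y - PP p a x y) * (a * (1 - p) + (1 - a) * p) ^+ n <=
  (((1 - a) * p) ^+ n - (a * (1 - p)) ^+ n) * PY p a y.
Proof.
move=> hp1 hp2 ha1 ha2 hpa.
have h2 : (2^-1 : R) = 1/2 by rewrite mul1r.
rewrite h2 in hp1 ha2.
set A := (1 - a) * p; set B := a * (1 - p).
have B0 : 0 <= B by rewrite /B mulr_ge0 //; lra.
have BA : B <= A by rewrite /A /B; nra.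
have pr : 0 <= p <= 1 by apply/andP; split; lra.
have ar : 0 <= a <= 1 by apply/andP; split; lra.
have := @keyprod R A B B0 BA n (fun i => P1 p a (y i) (y i)) (fun i => P1 p a (~~ y i) (y i)).
case.
- by move=> i; apply: P1_ge0.
- by move=> i; apply: P1_ge0.
- move=> i; rewrite /P1 /A /B; case: (y i) => /=; rewrite ?addbb ?addbN ?addbb /=.
    by rewrite le_eqVlt; apply/orP; left; apply/eqP; ring.
  have : 0 <= a * (1 - a) by rewrite mulr_ge0 //; lra.
  move=> H. have : (1 - p) * (1 - p) <= p * p by nra.
  move=> H'. nra.
move=> _ H.
have E1 : a * (1 - p) + (1 - a) * p = A + B by rewrite /A /B; ring.
have E2 : PY p a y = \prod_i (P1 p a (y i) (y i) + P1 p a (~~ y i) (y i)).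
  rewrite PYE; apply: eq_bigr => i _; rewrite /P1; case: (y i) => /=; ring.
rewrite E1 E2; apply: le_trans H.
have q0 : 0 <= (A + B) ^+ n by rewrite exprn_ge0 // addr_ge0 // (le_trans B0).
apply: ler_wpM2r => //; rewrite lerD2l lerN2 /PP.
apply: ler_prod => i _; rewrite P1_ge0 //=.
rewrite /P1; case: (x i); case: (y i) => /=; lra.
Qed.

Lemma converse (R : realType) (n : nat) (p a : R) (W : bstr n -> bstr n -> R) :
  2^-1 <= p -> p < 1 -> 0 <= a -> a < 2^-1 -> p < 1 - a ->
  is_channel n W ->
  ((1 - a) ^+ n - PcXgZ n p a W) * (a * (1 - p) + (1 - a) * p) ^+ n <=
  (((1 - a) * p) ^+ n - (a * (1 - p)) ^+ n) * (1 - PcYgZ n p a W).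
Proof.
move=> hp1 hp2 ha1 ha2 hpa [W0 W1].
set q := a * (1 - p) + (1 - a) * p.
set D := ((1 - a) * p) ^+ n - (a * (1 - p)) ^+ n.
have pr : 0 <= p <= 1 by apply/andP; split; lra.
have ar : 0 <= a <= 1 by apply/andP; split; lra.
have PY0 : forall y : bstr n, 0 <= PY p a y.
  move=> y; rewrite PYE; apply: prodr_ge0 => i _; case: (y i); rewrite /q; nra.
have PP0 : forall x y : bstr n, 0 <= PP p a x y.
  by move=> x y; apply: prodr_ge0 => i _; apply: P1_ge0.
have e1 : (1 - a) ^+ n = \sum_(z : bstr n) \sum_(y : bstr n) PP p a y y * W y z.
  rewrite exchange_big /= -(sum_diag n p a); apply: eq_bigr => y _.
  by rewrite -mulr_sumr W1 mulr1 PPE.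
have e2 : 1 = \sum_(z : bstr n) \sum_(y : bstr n) PY p a y * W y z.
  rewrite exchange_big /= -(sumPY n p a); apply: eq_bigr => y _.
  by rewrite -mulr_sumr W1 mulr1.
rewrite e1 {1}e2 /PcXgZ /PcYgZ -!sumrB mulr_suml mulr_sumr; apply: ler_sum => z _.
have eY : forall y, \sum_(x : bstr n) Pjoint p a W x y z = PY p a y * W y z.
  by move=> y; rewrite /Pjoint /PY -big_distrl.
have eM : \big[Num.max/0]_(y : bstr n) \sum_(x : bstr n) Pjoint p a W x y z =
          \big[Num.max/0]_(y : bstr n) (PY p a y * W y z).
  by apply: eq_bigr => y _; rewrite eY.
rewrite eM.
have [y0 _ ->] := @eq_bigmax _ _ (bstr n) 0 (zeros n) xpredT (fun y => PY p a y * W y z) isT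
   (fun y _ => mulr_ge0 (PY0 y) (W0 y z)).
have hX : \sum_(y : bstr n) PP p a y0 y * W y z <=
          \big[Num.max/0]_(x : bstr n) \sum_(y : bstr n) Pjoint p a W x y z.
  apply: le_trans (le_bigmax _ _ y0); rewrite le_eqVlt; apply/orP; left; apply/eqP.
  by apply: eq_bigr => y _; rewrite /Pjoint PPE.
have q0 : 0 <= q ^+ n by rewrite exprn_ge0 // /q; nra.
have hX' : \sum_(y : bstr n) PP p a y y * W y z -
   \big[Num.max/0]_(x : bstr n) \sum_(y : bstr n) Pjoint p a W x y z <=
   \sum_(y : bstr n) PP p a y y * W y z - \sum_(y : bstr n) PP p a y0 y * W y z.
  by rewrite lerD2l lerN2.
apply: (le_trans (ler_wpM2r q0 hX')).
rewrite -sumrB (bigD1 y0) //= (bigD1 y0 (F := fun y => PY p a y * W y z)) //=.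
rewrite subrr add0r [PY p a y0 * W y0 z + _]addrC addrK mulr_suml mulr_sumr; apply: ler_sum => y _.
rewrite -mulrBl mulrAC mulrA.
have := key_ineq y0 y hp1 hp2 ha1 ha2 hpa; rewrite -/q -/D => H.
by apply: ler_wpM2r; [apply: W0 | ].
Qed.

Lemma zeros_ones (n : nat) : (0 < n)%N -> zeros n != ones n.
Proof.
move=> n0; apply/negP => /eqP /ffunP /(_ (Ordinal n0)); by rewrite !ffunE.
Qed.

Lemma sum_eqr (R : realType) (n : nat) (F : bstr n -> R) (y : bstr n) :
  \sum_(z : bstr n) F z * (z == y)%:R = F y.
Proof.
rewrite (bigD1 y) //= eqxx mulr1 big1 ?addr0 // => z /negbTE ->; by rewrite mulr0.
Qed.

Lemma sum_eql (R : realType) (n : nat) (F : bstr n -> R) (y : bstr n) :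
  \sum_(z : bstr n) F z * (y == z)%:R = F y.
Proof.
rewrite -(sum_eqr F y); apply: eq_bigr => z _; by rewrite eq_sym.
Qed.

Lemma Zsum1 (R : realType) (n : nat) (g : R) (F : bstr n -> R) : (0 < n)%N ->
  \sum_(z : bstr n) F z * Zchan n g (ones n) z = g * F (zeros n) + (1 - g) * F (ones n).
Proof.
move=> n0; have h01 := zeros_ones n0.
rewrite (bigD1 (zeros n)) //= (bigD1 (ones n)) /=; last by rewrite eq_sym.
rewrite big1; first by rewrite /Zchan eqxx /= eqxx eq_sym (negbTE h01) addr0 [g * _]mulrC [(1 - g) * _]mulrC.
move=> z /andP[z0 z1]; by rewrite /Zchan eqxx /= (negbTE z0) (negbTE z1) mulr0.
Qed.

Lemma Zsum (R : realType) (n : nat) (g : R) (F : bstr n -> R) (z : bstr n) :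
  \sum_(y : bstr n) F y * Zchan n g y z =
  F z * (z != ones n)%:R + F (ones n) * Zchan n g (ones n) z.
Proof.
rewrite (bigD1 (ones n)) //= addrC; congr (_ + _).
rewrite (eq_bigr (fun y => F y * (z == y)%:R)); last first.
  by move=> y y1; rewrite /Zchan y1.
case: (eqVneq z (ones n)) => [->|z1].
  by rewrite big1 ?mulr0 // => y y1; rewrite eq_sym (negbTE y1) mulr0.
rewrite (bigD1 z) //= eqxx mulr1 big1 ?addr0 ?mulr1 //.
by move=> y /andP[_ yz]; rewrite eq_sym (negbTE yz) mulr0.
Qed.

Lemma Zchannel (R : realType) (n : nat) (g : R) : (0 < n)%N -> 0 <= g <= 1 ->
  is_channel n (Zchan n g).
Proof.
move=> n0 /andP[g0 g1]; split.
  move=> y z; rewrite /Zchan; case: (y != ones n) => //.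
  case: (z == zeros n) => //; case: (z == ones n) => //; lra.
move=> y; case: (eqVneq y (ones n)) => [->|y1].
  have H := Zsum1 g (fun _ => 1) n0.
  rewrite (eq_bigr (fun z => 1 * Zchan n g (ones n) z)); last by move=> *; rewrite mul1r.
  rewrite H !mulr1; ring.
rewrite (eq_bigr (fun z => 1 * (z == y)%:R)); last by move=> z _; rewrite /Zchan y1 mul1r.
by rewrite sum_eqr.
Qed.

Lemma PP_diag (R : realType) (n : nat) (p a : R) (x y : bstr n) :
  2^-1 <= p -> p < 1 -> 0 <= a -> a < 2^-1 -> p < 1 - a ->
  PP p a x y <= PP p a y y.
Proof.
move=> hp1 hp2 ha1 ha2 hpa.
have h2 : (2^-1 : R) = 1/2 by rewrite mul1r.
rewrite h2 in hp1 ha2.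
have pr : 0 <= p <= 1 by apply/andP; split; lra.
have ar : 0 <= a <= 1 by apply/andP; split; lra.
apply: ler_prod => i _; rewrite P1_ge0 //=.
rewrite /P1; case: (x i); case: (y i) => /=; nra.
Qed.

Lemma PP_le1 (R : realType) (n : nat) (p a : R) (x y : bstr n) :
  0 <= p <= 1 -> 0 <= a <= 1 -> PP p a x y <= 1.
Proof.
move=> pr ar; apply: le_trans (_ : \prod_(i < n) (1 : R) <= 1).
  apply: ler_prod => i _; rewrite P1_ge0 //=.
  move: pr ar => /andP[? ?] /andP[? ?].
  rewrite /P1; case: (x i); case: (y i) => /=; nra.
by rewrite prodc expr1n.
Qed.

Lemma col0 (R : realType) (n : nat) (p a g : R) (x : bstr n) :
  2^-1 <= p -> p < 1 -> 0 <= a -> a < 2^-1 -> p < 1 - a ->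
  0 <= g -> g <= ((1 - p) * (1 - a) - p * a) * ((1 - p) * (1 - a)) ^+ n ->
  PP p a x (zeros n) + g * PP p a x (ones n) <=
  PP p a (zeros n) (zeros n) + g * PP p a (zeros n) (ones n).
Proof.
move=> hp1 hp2 ha1 ha2 hpa g0 g1.
have h2 : (2^-1 : R) = 1/2 by rewrite mul1r.
rewrite h2 in hp1 ha2.
have pr : 0 <= p <= 1 by apply/andP; split; lra.
have ar : 0 <= a <= 1 by apply/andP; split; lra.
case: (eqVneq x (zeros n)) => [->|xn0]; first by [].
have [j xj] : exists j, x j.
  apply/existsP; apply: contraR xn0 => /existsPn H; apply/eqP/ffunP => i.
  by rewrite ffunE; apply/negbTE.
set c := (1 - p) * (1 - a).
have c0 : 0 <= c by rewrite /c mulr_ge0 //; lra.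
have c1 : c <= 1 by rewrite /c; nra.
set M := \prod_(i | i != j) c.
have M0 : 0 <= M by apply: prodr_ge0.
have E00 : PP p a (zeros n) (zeros n) = c * M.
  rewrite /PP (bigD1 j) //= !ffunE /P1 /=; congr (_ * _).
  by apply: eq_bigr => i _; rewrite !ffunE.
have Ec : c ^+ n = c * M by rewrite -prodc (bigD1 j).
have Ex0 : PP p a x (zeros n) <= p * a * M.
  rewrite /PP (bigD1 j) //= xj ffunE /P1 /=.
  apply: ler_wpM2l; first by apply: mulr_ge0; lra.
  apply: ler_prod => i _; rewrite P1_ge0 //= ffunE /P1 /c.
  case: (x i) => /=; nra.
have Ex1 : PP p a x (ones n) <= 1 by apply: PP_le1.
have E01 : 0 <= PP p a (zeros n) (ones n).
  by apply: prodr_ge0 => i _; apply: P1_ge0.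
have cpa : 0 <= c - p * a by rewrite /c; nra.
have HM : c * M <= M by nra.
have : (c - p * a) * (c * M) <= (c - p * a) * M by apply: ler_wpM2l.
rewrite -Ec in g1 *; move=> H.
have : g * PP p a x (ones n) <= g by nra.
have : 0 <= g * PP p a (zeros n) (ones n) by apply: mulr_ge0.
rewrite E00; move=> H1 H2.
have H3 : (c - p * a) * M = c * M - p * a * M by ring.
apply: (le_trans _ (_ : c * M <= _)); last by rewrite lerDl.
apply: le_trans (lerD Ex0 H2) _.
have g2 := le_trans g1 H.
apply: le_trans (lerD (lexx _) g2) _.
by rewrite H3 addrC subrK.
Qed.

Lemma PP11 (R : realType) (n : nat) (p a : R) :
  PP p a (ones n) (ones n) = ((1 - a) * p) ^+ n.
Proof. rewrite /PP -prodc; apply: eq_bigr => i _; rewrite !ffunE /P1 /=; ring. Qed.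

Lemma PP01 (R : realType) (n : nat) (p a : R) :
  PP p a (zeros n) (ones n) = (a * (1 - p)) ^+ n.
Proof. rewrite /PP -prodc; apply: eq_bigr => i _; rewrite !ffunE /P1 /=; ring. Qed.

Lemma PcX_Z (R : realType) (n : nat) (p a g : R) : (0 < n)%N ->
  2^-1 <= p -> p < 1 -> 0 <= a -> a < 2^-1 -> p < 1 - a ->
  0 <= g -> g <= 1 -> g <= ((1 - p) * (1 - a) - p * a) * ((1 - p) * (1 - a)) ^+ n ->
  PcXgZ n p a (Zchan n g) <=
  (1 - a) ^+ n - g * (((1 - a) * p) ^+ n - (a * (1 - p)) ^+ n).
Proof.
move=> n0 hp1 hp2 ha1 ha2 hpa g0 g1 gg.
have h01 := zeros_ones n0.
have [Z0 Z1] := Zchannel n0 (introT andP (conj g0 g1)).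
have h2 : (2^-1 : R) = 1/2 by rewrite mul1r.
have pr : 0 <= p <= 1 by apply/andP; split; rewrite h2 in hp1 ha2; lra.
have ar : 0 <= a <= 1 by apply/andP; split; rewrite h2 in hp1 ha2; lra.
have PP0 : forall x y : bstr n, 0 <= PP p a x y.
  by move=> x y; apply: prodr_ge0 => i _; apply: P1_ge0.
rewrite /PcXgZ.
apply: (@le_trans _ _ (\sum_(z : bstr n) \sum_(y : bstr n) PP p a z y * Zchan n g y z)).
  apply: ler_sum => z _; apply: bigmax_le.
    by apply: sumr_ge0 => y _; apply: mulr_ge0.
  move=> x _.
  rewrite (eq_bigr (fun y => PP p a x y * Zchan n g y z)); last first.
    by move=> y _; rewrite /Pjoint PPE.
  rewrite !Zsum.
  case: (eqVneq z (ones n)) => [->|z1].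
    rewrite /= !mulr0 !add0r /Zchan eqxx /= eq_sym (negbTE h01).
    by apply: ler_wpM2r; [lra | apply: PP_diag].
  rewrite /= !mulr1.
  case: (eqVneq z (zeros n)) => [->|z0].
    rewrite /Zchan eqxx /= eqxx ![_ * g]mulrC.
    by apply: col0.
  rewrite /Zchan eqxx /= (negbTE z0) (negbTE z1) !mulr0 !addr0.
  by apply: PP_diag.
rewrite exchange_big /= (bigD1 (ones n)) //=.
rewrite (Zsum1 g (fun z => PP p a z (ones n)) n0).
rewrite (eq_bigr (fun y => PP p a y y)); last first.
  move=> y y1; rewrite (eq_bigr (fun z => PP p a z y * (z == y)%:R)).
    by rewrite sum_eqr.
  by move=> z _; rewrite /Zchan y1.
have ED : (1 - a) ^+ n = PP p a (ones n) (ones n) + \sum_(y | y != ones n) PP p a y y.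
  rewrite -(sum_diag n p a) (bigD1 (ones n)) //= PPE; congr (_ + _).
  by apply: eq_bigr => y _; rewrite PPE.
rewrite ED PP11 PP01.
rewrite le_eqVlt; apply/orP; left; apply/eqP; ring.
Qed.

Lemma PcY_Z (R : realType) (n : nat) (p a g : R) : (0 < n)%N ->
  1 - g * (a * (1 - p) + (1 - a) * p) ^+ n <= PcYgZ n p a (Zchan n g).
Proof.
move=> n0; have h01 := zeros_ones n0.
rewrite /PcYgZ.
apply: (@le_trans _ _ (\sum_(z : bstr n) PY p a z * Zchan n g z z)); last first.
  apply: ler_sum => z _; apply: le_trans (le_bigmax _ _ z).
  by rewrite /Pjoint /PY big_distrl.
rewrite -{1}(sumPY n p a) (bigD1 (ones n)) //= (bigD1 (ones n) (P := xpredT)) //=.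
have h10 : (ones n == zeros n) = false by rewrite eq_sym (negbTE h01).
have -> : Zchan n g (ones n) (ones n) = 1 - g by rewrite /Zchan eqxx /= h10.
rewrite [X in _ <= _ + X](eq_bigr (fun z => PY p a z)); last first.
  by move=> z z1; rewrite /Zchan z1 eqxx mulr1.
have -> : PY p a (ones n) = (a * (1 - p) + (1 - a) * p) ^+ n.
  by rewrite PYE -prodc; apply: eq_bigr => i _; rewrite ffunE.
rewrite le_eqVlt; apply/orP; left; apply/eqP; ring.
Qed.

Lemma nrootK (R : realType) (n : nat) (u : R) : (0 < n)%N -> 0 <= u -> (nroot n u) ^+ n = u.
Proof.
move=> n0 u0; rewrite /nroot -powR_mulrn ?powR_ge0 // -powRrM mulVf ?powRr1 //.
by rewrite pnatr_eq0 -lt0n.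
Qed.

Lemma nroot_pow (R : realType) (n : nat) (e : R) : (0 < n)%N -> 0 <= e -> nroot n (e ^+ n) = e.
Proof.
move=> n0 e0; rewrite /nroot -powR_mulrn // -powRrM mulfV ?powRr1 //.
by rewrite pnatr_eq0 -lt0n.
Qed.

Lemma nroot_le (R : realType) (n : nat) (u v : R) : 0 <= u -> u <= v -> nroot n u <= nroot n v.
Proof.
move=> u0 uv; rewrite /nroot; apply: (ge0_ler_powR _ _ _ uv); rewrite ?nnegrE //.
  by rewrite invr_ge0 ler0n.
exact: (le_trans u0).
Qed.

Lemma powdiff (R : realType) (n : nat) (e u : R) : 0 <= e -> e <= u -> u <= 1 ->
  u ^+ n - e ^+ n <= n%:R * (u - e).
Proof.
move=> e0 eu u1; elim: n => [|n IH]; first by rewrite !expr0 subrr mul0r.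
have H : u ^+ n.+1 - e ^+ n.+1 = u * (u ^+ n - e ^+ n) + e ^+ n * (u - e) by rewrite !exprS; ring.
have en : e ^+ n <= 1 by apply: exprn_ile1 => //; apply: le_trans u1.
have u0 : 0 <= u by apply: le_trans eu.
have d0 : 0 <= u ^+ n - e ^+ n by rewrite subr_ge0 lerXn2r // nnegrE.
rewrite H -natr1 mulrDl mul1r; apply: lerD.
  apply: le_trans IH; rewrite -[X in _ <= X]mul1r; by apply: ler_wpM2r.
rewrite -[X in _ <= X]mul1r; apply: ler_wpM2r => //; lra.
Qed.

Lemma PcY_ge0 (R : realType) (n : nat) (p a : R) W : 0 <= PcYgZ n p a W.
Proof. by apply: sumr_ge0 => z _; apply: bigmax_ge_id. Qed.
Lemma PcX_ge0 (R : realType) (n : nat) (p a : R) W : 0 <= PcXgZ n p a W.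
Proof. by apply: sumr_ge0 => z _; apply: bigmax_ge_id. Qed.

Unset Implicit Arguments.

Theorem theorem4 (R : realType) (n : nat) (p a : R) :
  (0 < n)%N ->
  2^-1 <= p -> p < 1 ->
  0 <= a -> a < 2^-1 -> p < 1 - a ->
  let q := a * (1 - p) + (1 - a) * p in
  exists epsL : R, p <= epsL /\ epsL < 1 - a /\
    forall eps : R, epsL <= eps -> eps <= 1 - a ->
      (hlow n p a eps) ^+ n = 1 - zeta n p a eps * q ^+ n /\
      achieves n p a eps (Zchan n (zeta n p a eps)).
Proof.
move=> n0 hp1 hp2 ha1 ha2 hpa q.
have h2 : (2^-1 : R) = 1/2 by rewrite mul1r.
have hp1' : 1/2 <= p by rewrite -h2.
have ha2' : a < 1/2 by rewrite -h2.
set A := (1 - a) * p; set B := a * (1 - p).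
set D := A ^+ n - B ^+ n.
have B0 : 0 <= B by rewrite /B mulr_ge0 //; lra.
have BA : B < A by rewrite /A /B; nra.
have D0 : 0 < D by rewrite /D subr_gt0 ltrXn2r // -lt0n.
set c := (1 - p) * (1 - a).
have c0 : 0 < c by rewrite /c mulr_gt0 //; lra.
set g1 := (c - p * a) * c ^+ n.
have g10 : 0 < g1 by rewrite /g1 mulr_gt0 ?exprn_gt0 // /c; nra.
set gm := Num.min 1 g1.
have gm0 : 0 < gm by rewrite /gm lt_min ltr01 g10.
have gm1 : gm <= 1 by rewrite /gm ge_min lexx.
have gmg : gm <= g1 by rewrite /gm ge_min lexx orbT.
set del := gm * D / n%:R.
have n0' : (0 : R) < n%:R by rewrite ltr0n.
have del0 : 0 < del by rewrite /del divr_gt0 // mulr_gt0.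
exists (Num.max p (1 - a - del)); split; first by rewrite le_max lexx.
split; first by rewrite gt_max hpa /=; lra.
move=> eps; rewrite ge_max => /andP[peps deps] epsa.
have eps0 : 0 <= eps by lra.
have pr : 0 <= p <= 1 by apply/andP; split; lra.
have ar : 0 <= a <= 1 by apply/andP; split; lra.
have -> : zeta n p a eps = ((1 - a) ^+ n - eps ^+ n) / D by [].
set g := ((1 - a) ^+ n - eps ^+ n) / D.
have gD : g * D = (1 - a) ^+ n - eps ^+ n by rewrite /g mulfVK // gt_eqF.
have g0 : 0 <= g.
  rewrite /g divr_ge0 ?(ltW D0) // subr_ge0 lerXn2r // nnegrE; lra.
have ggm : g <= gm.
  rewrite /g ler_pdivrMr //.
  apply: le_trans (powdiff n eps0 epsa _) _; first lra.
  have : n%:R * (1 - a - eps) <= n%:R * del by apply: ler_wpM2l; lra.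
  move=> H; apply: le_trans H _.
  by rewrite /del mulrC divfK ?gt_eqF // mulrC.
have gle1 : g <= 1 by apply: le_trans gm1.
have gleg1 : g <= g1 by apply: le_trans gmg.
set Z := Zchan n g.
have chZ : is_channel n Z by apply: Zchannel => //; rewrite g0 gle1.
have PXZ : PcXgZ n p a Z <= eps ^+ n.
  apply: le_trans (PcX_Z n0 hp1 hp2 ha1 ha2 hpa g0 gle1 gleg1) _.
  rewrite -/A -/B -/D gD; lra.
have feasZ : feasible n p a eps Z.
  split => //; rewrite -(nroot_pow n0 eps0); apply: nroot_le => //; exact: PcX_ge0.
have q0 : 0 <= q ^+ n by rewrite exprn_ge0 // /q; nra.
have conv : forall W, feasible n p a eps W -> PcYgZ n p a W <= 1 - g * q ^+ n.
  move=> W [chW fW].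
  have PXW : PcXgZ n p a W <= eps ^+ n.
    rewrite -(nrootK n0 (PcX_ge0 p a W)); rewrite lerXn2r // nnegrE //.
    by rewrite /nroot powR_ge0.
  have := converse hp1 hp2 ha1 ha2 hpa chW; rewrite -/q -/A -/B -/D => H.
  have H2 : g * D * q ^+ n <= D * (1 - PcYgZ n p a W).
    apply: le_trans H; apply: ler_wpM2r => //; rewrite gD; lra.
  have H3 : g * q ^+ n <= 1 - PcYgZ n p a W.
    by rewrite -(ler_pM2l D0) mulrA [D * g]mulrC.
  lra.
have PYZ : PcYgZ n p a Z = 1 - g * q ^+ n.
  by apply: le_anti; rewrite conv //= PcY_Z.
have hl : hlow n p a eps = nroot n (PcYgZ n p a Z).
  rewrite /hlow; apply: le_anti; apply/andP; split.
    apply: ge_sup; first by exists (nroot n (PcYgZ n p a Z)); exists Z.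
    move=> r [W [fW ->]]; apply: nroot_le; first exact: PcY_ge0.
    by rewrite PYZ; apply: conv.
  apply: sup_upper_bound; last by exists Z.
  split; first by exists (nroot n (PcYgZ n p a Z)); exists Z.
  exists (nroot n (PcYgZ n p a Z)) => r [W [fW ->]]; apply: nroot_le; first exact: PcY_ge0.
  by rewrite PYZ; apply: conv.
split; first by rewrite hl nrootK ?PcY_ge0.
by split.
Qed.
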